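(* Let $M^{\circ}=\langle \mathcal{S},\mathcal{A},s_{\text{init}},H,T^{\circ},R^{\circ}\rangle$ be a deterministic episodic MDP (abstract simulator) and let $\eta\in[0,1]$ be a perturbation level. Then the abstract policy $\rho$ returned by the Robust Dynamic Programming procedure $\mathrm{RDP}(M^{\circ},\eta)$ is a robust abstract policy, i.e. \[ \min_{M\in\mathcal{P}(M^{\circ},\eta)} V^{\rho}_{M}=\max_{\psi\in\Psi}\ \min_{M\in\mathcal{P}(M^{\circ},\eta)} V^{\psi}_{M}, \] so that $\rho\in\arg\max_{\psi\in\Psi}\min_{M\in\mathcal{P}(M^{\circ},\eta)}V^{\psi}_{M}$.
   Context: An episodic MDP $M=\langle\mathcal{S},\mathcal{A},s_{\text{init}},H,T,R\rangle$ has finite state space $\mathcal{S}$, finite action space $\mathcal{A}$, fixed initial state $s_{\text{init}}$, horizon $H$, transitions $T_h(\cdot\mid s,a)\in\Delta(\mathcal{S})$ and rewards $R_h(s,a)\in[0,1]$ for $h\in[H]$. It is deterministic if $T_h(s'\mid s,a)\in\{0,1\}$ for all $h,s,a,s'$. An abstract policy is a map $\psi:[H]\times\mathcal{S}\to\mathcal{A}$; $\Psi$ is the set of all such maps; $V^{\psi}_M=\mathbb{E}_{M,\psi}[r_1+\dots+r_H]$ with $s_1=s_{\text{init}}$, $a_h=\psi_h(s_h)$, $r_h=R_h(s_h,a_h)$, $s_{h+1}\sim T_h(\cdot\mid s_h,a_h)$. $\eta$-perturbation: an MDP $M'=\langle\mathcal{S},\mathcal{A},s_{\text{init}},H,T',R'\rangle$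 is an $\eta$-perturbation of $M=\langle\mathcal{S},\mathcal{A},s_{\text{init}},H,T,R\rangle$ if there is $\xi:[H]\times\mathcal{S}\times\mathcal{A}\to\Delta(\mathcal{A})$ with $\xi_h(a\mid s,a)\ge 1-\eta$ for all $h,s,a$ such that $T'_h(s'\mid s,a)=\sum_{a'}T_h(s'\mid s,a')\xi_h(a'\mid s,a)$ and $R'_h(s,a)=\sum_{a'}R_h(s,a')\xi_h(a'\mid s,a)$ for all $h,s,a,s'$. $\mathcal{P}(M,\eta)$ denotes the set of all $\eta$-perturbations of $M$. $\mathrm{RDP}(M^{\circ},\eta)$: set $\tilde V_{H+1}(s)=0$ for all $s$; for $h=H,\dots,1$ set $\tilde Q_h(s,a)=R^{\circ}_h(s,a)+\sum_{s'}T^{\circ}_h(s'\mid s,a)\tilde V_{h+1}(s')$ for all $s,a$ and $\tilde V_h(s)=(1-\eta)\max_a\tilde Q_h(s,a)+\eta\min_a\tilde Q_h(s,a)$ for all $s$; return $\rho$ with $\rho_h(s)\in\arg\max_a\tilde Q_h(s,a)$. *)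

(* Defs.v *)
From HB Require Import structures.
From mathcomp Require Import all_boot all_order all_algebra.
Set Implicit Arguments. Unset Strict Implicit. Unset Printing Implicit Defensive.
Import Order.TTheory GRing.Theory Num.Theory.
Local Open Scope ring_scope.

(* Episodic MDP <S, A, s_init, H, T, R>.  Steps are 0-indexed: h = 0, ..., H-1
   corresponds to the paper's steps 1, ..., H.  T h s a s' = T_h(s' | s, a). *)
Record mdp (S A : finType) (R : realFieldType) := MDP {
  s_init : S;
  hor : nat;
  trans : nat -> S -> A -> S -> R;
  rew : nat -> S -> A -> R }.

Section Defs.
Variables (R : realFieldType) (S A : finType).

Definition is_dist (T : finType) (p : T -> R) :=
  (forall x, 0 <= p x) /\ \sum_(x : T) p x = 1.

Definition valid_mdp (M : mdp S A R) :=
  forall h, (h < hor M)%N -> forall s a,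
    is_dist (trans M h s a) /\ 0 <= rew M h s a <= 1.

Definition deterministic (M : mdp S A R) :=
  forall h, (h < hor M)%N -> forall s a s',
    trans M h s a s' = 0 \/ trans M h s a s' = 1.

Definition perturbation (M : mdp S A R) (eta : R) (M' : mdp S A R) :=
  s_init M' = s_init M /\ hor M' = hor M /\
  exists xi : nat -> S -> A -> A -> R,
    forall h, (h < hor M)%N -> forall s a,
      is_dist (xi h s a) /\ 1 - eta <= xi h s a a /\
      (forall s', trans M' h s a s' = \sum_(a' : A) trans M h s a' s' * xi h s a a') /\
      rew M' h s a = \sum_(a' : A) rew M h s a' * xi h s a a'.

Definition policy := nat -> S -> A.

(* expected total reward, by backward induction:
   vrec M psi n h s = expected reward collected in steps h, ..., h+n-1 from s *)
Fixpoint vrec (M : mdp S A R) (psi : policy) (n h : nat) (s : S) : R :=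
  match n with
  | 0 => 0
  | n'.+1 => rew M h s (psi h s)
             + \sum_(s' : S) trans M h s (psi h s) s' * vrec M psi n' h.+1 s'
  end.

Definition value (M : mdp S A R) (psi : policy) : R :=
  vrec M psi (hor M) 0 (s_init M).

(* max / min of f over the finite action set A (0 if A is empty) *)
Definition maxA (f : A -> R) : R :=
  if [pick a : A] is Some a0 then \big[Num.max/f a0]_(a : A) f a else 0.
Definition minA (f : A -> R) : R :=
  if [pick a : A] is Some a0 then \big[Num.min/f a0]_(a : A) f a else 0.

(* RDP: Vt n h s = tilde V at step h with n remaining steps *)
Fixpoint rdpV (M : mdp S A R) (eta : R) (n h : nat) (s : S) : R :=
  match n with
  | 0 => 0
  | n'.+1 =>
    let Q := fun a => rew M h s a
                      + \sum_(s' : S) trans M h s a s' * rdpV M eta n' h.+1 s' in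
    (1 - eta) * maxA Q + eta * minA Q
  end.

Definition rdpQ (M : mdp S A R) (eta : R) (h : nat) (s : S) (a : A) : R :=
  rew M h s a + \sum_(s' : S) trans M h s a s' * rdpV M eta (hor M - h.+1) h.+1 s'.

(* rho is a possible output of RDP(M, eta): rho_h(s) in argmax_a tilde Q_h(s,a) *)
Definition rdp_output (M : mdp S A R) (eta : R) (rho : policy) :=
  forall h, (h < hor M)%N -> forall s a, rdpQ M eta h s a <= rdpQ M eta h s (rho h s).

End Defs.

(* Main.v *)
Require Import Defs.
From HB Require Import structures.
From mathcomp Require Import all_boot all_order all_algebra.
From mathcomp Require Import ring lra.
From Stdlib Require Import FunctionalExtensionality.
Import Order.TTheory GRing.Theory Num.Theory.
Local Open Scope ring_scope.

Section Aux.
Variables (R : realFieldType) (S A : finType).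

Lemma minA_le (f : A -> R) a : Defs.minA f <= f a.
Proof.
rewrite /Defs.minA; case: pickP => [a0 _|H]; last by have := H a.
by rewrite (bigD1 a) //= ge_min lexx.
Qed.

Lemma maxA_ge (f : A -> R) a : f a <= Defs.maxA f.
Proof.
rewrite /Defs.maxA; case: pickP => [a0 _|H]; last by have := H a.
by rewrite (bigD1 a) //= le_max lexx.
Qed.

Lemma minA_att (f : A -> R) (a : A) : exists b, Defs.minA f = f b.
Proof.
rewrite /Defs.minA; case: pickP => [a0 _|H]; last by have := H a.
apply: (big_ind (fun x => exists b, x = f b)); first by exists a0.
  move=> x y [b ->] [c ->].
  by rewrite /Order.min; case: ifP => _; [exists b|exists c].
by move=> b _; exists b.
Qed.

Lemma maxA_att (f : A -> R) (a : A) : exists b, Defs.maxA f = f b.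
Proof.
rewrite /Defs.maxA; case: pickP => [a0 _|H]; last by have := H a.
apply: (big_ind (fun x => exists b, x = f b)); first by exists a0.
  move=> x y [b ->] [c ->].
  by rewrite /Order.max; case: ifP => _; [exists c|exists b].
by move=> b _; exists b.
Qed.

Lemma minA_mono (f g : A -> R) (a : A) : (forall a, f a <= g a) -> Defs.minA f <= Defs.minA g.
Proof.
move=> H; have [b ->] := minA_att g a.
exact: le_trans (minA_le f b) (H b).
Qed.

Lemma maxA_eq (f : A -> R) b : (forall a, f a <= f b) -> Defs.maxA f = f b.
Proof.
move=> H; have [c E] := maxA_att f b.
apply/eqP; rewrite eq_le maxA_ge andbT E; exact: H.
Qed.

Definition Qof (M : mdp S A R) h s (V : S -> R) a :=
  rew M h s a + \sum_(s' : S) trans M h s a s' * V s'.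

Lemma vrec_S (M : mdp S A R) psi n h s :
  vrec M psi n.+1 h s = Qof M h s (vrec M psi n h.+1) (psi h s).
Proof. by []. Qed.

Lemma rdpV_S (M : mdp S A R) eta n h s :
  rdpV M eta n.+1 h s = (1 - eta) * Defs.maxA (Qof M h s (rdpV M eta n h.+1))
                        + eta * Defs.minA (Qof M h s (rdpV M eta n h.+1)).
Proof. by []. Qed.

Fixpoint Wrec (M0 : mdp S A R) eta (psi : policy S A) n h s : R :=
  match n with
  | 0 => 0
  | n'.+1 => (1 - eta) * Qof M0 h s (Wrec M0 eta psi n' h.+1) (psi h s)
             + eta * Defs.minA (Qof M0 h s (Wrec M0 eta psi n' h.+1))
  end.

Lemma pert_Q (M M0 : mdp S A R) h s a (xi : A -> R) (V : S -> R) :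
  (forall s', trans M h s a s' = \sum_(a' : A) trans M0 h s a' s' * xi a') ->
  rew M h s a = \sum_(a' : A) rew M0 h s a' * xi a' ->
  Qof M h s V a = \sum_(a' : A) xi a' * Qof M0 h s V a'.
Proof.
move=> HT HR; rewrite /Qof HR.
have -> : \sum_(s' : S) trans M h s a s' * V s' =
   \sum_(s' : S) \sum_(a' : A) trans M0 h s a' s' * xi a' * V s'.
  by apply: eq_bigr => s' _; rewrite HT big_distrl.
rewrite exchange_big /= -big_split /=; apply: eq_bigr => a' _.
rewrite mulrDr big_distrr /= mulrC; congr (_ + _).
by apply: eq_bigr => s' _; ring.
Qed.

Lemma mix_ge eta (xi Q : A -> R) a m :
  is_dist xi -> 1 - eta <= xi a -> (forall a', m <= Q a') ->
  (1 - eta) * Q a + eta * m <= \sum_(a' : A) xi a' * Q a'.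
Proof.
move=> [H0 H1] Ha Hm.
have E : \sum_(a' : A) xi a' * (Q a' - m) = \sum_(a' : A) xi a' * Q a' - m.
  under eq_bigr do rewrite mulrBr.
  by rewrite sumrB -big_distrl /= H1 mul1r.
have Hb : xi a * (Q a - m) <= \sum_(a' : A) xi a' * (Q a' - m).
  rewrite (bigD1 a) //= lerDl; apply: sumr_ge0 => b _.
  by apply: mulr_ge0 => //; rewrite subr_ge0.
rewrite E in Hb.
have Hp : 0 <= (xi a - (1 - eta)) * (Q a - m).
  by apply: mulr_ge0; rewrite subr_ge0.
nra.
Qed.

Lemma Qof_le (M0 : mdp S A R) h s (V1 V2 : S -> R) a :
  valid_mdp M0 -> (h < hor M0)%N -> (forall s', V1 s' <= V2 s') ->
  Qof M0 h s V1 a <= Qof M0 h s V2 a.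
Proof.
move=> Hv hlt HV; rewrite /Qof lerD2l; apply: ler_sum => s' _.
apply: ler_wpM2l => //; exact: (proj1 (proj1 (Hv h hlt s a)) s').
Qed.

Lemma W_le_v (M0 M : mdp S A R) eta psi :
  valid_mdp M0 -> perturbation M0 eta M ->
  forall n h s, (h + n = hor M0)%N -> Wrec M0 eta psi n h s <= vrec M psi n h s.
Proof.
move=> Hv HP; elim=> [|n IH] h s Hh; first by rewrite lexx.
have hlt : (h < hor M0)%N by rewrite -Hh addnS ltnS leq_addr.
case: HP => _ [_ [xi Hxi]].
have [Hd [Ha [HT HR]]] := Hxi h hlt s (psi h s).
rewrite vrec_S (@pert_Q M M0 h s (psi h s) _ _ HT HR) /=.
apply: (le_trans (@mix_ge eta _ (Qof M0 h s (Wrec M0 eta psi n h.+1)) _ _ Hd Ha _)).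
  by move=> a'; apply: minA_le.
apply: ler_sum => a' _; apply: ler_wpM2l; first exact: (proj1 Hd).
apply: Qof_le => // s'; apply: IH; by rewrite addSnnS.
Qed.

Lemma W_le_rdp (M0 : mdp S A R) eta psi :
  valid_mdp M0 -> 0 <= eta <= 1 ->
  forall n h s, (h + n <= hor M0)%N -> Wrec M0 eta psi n h s <= rdpV M0 eta n h s.
Proof.
move=> Hv /andP[He0 He1]; elim=> [|n IH] h s Hh; first by rewrite lexx.
have hlt : (h < hor M0)%N by apply: leq_trans Hh; rewrite addnS ltnS leq_addr.
have HQ a : Qof M0 h s (Wrec M0 eta psi n h.+1) a <= Qof M0 h s (rdpV M0 eta n h.+1) a.
  by apply: Qof_le => // s'; apply: IH; rewrite addSnnS.
rewrite rdpV_S /=; apply: lerD.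
  apply: ler_wpM2l; first by rewrite subr_ge0.
  exact: le_trans (HQ _) (maxA_ge _ _).
apply: ler_wpM2l => //; exact: (@minA_mono _ _ (psi h s) HQ).
Qed.

Lemma W_eq_rdp (M0 : mdp S A R) eta rho :
  rdp_output M0 eta rho ->
  forall n h s, (h + n = hor M0)%N -> Wrec M0 eta rho n h s = rdpV M0 eta n h s.
Proof.
move=> Hr; elim=> [|n IH] h s Hh; first by [].
have hlt : (h < hor M0)%N by rewrite -Hh addnS ltnS leq_addr.
have E : Wrec M0 eta rho n h.+1 = rdpV M0 eta n h.+1.
  by apply: functional_extensionality => s'; apply: IH; rewrite addSnnS.
rewrite rdpV_S /= E; congr (_ * _ + _).
apply/esym/maxA_eq => a; have := Hr h hlt s a.
by rewrite /rdpQ -Hh addnS subSS addKn.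
Qed.

Definition Qw (M0 : mdp S A R) eta psi h s :=
  Qof M0 h s (Wrec M0 eta psi (hor M0 - h.+1) h.+1).
Definition amin (M0 : mdp S A R) eta (psi : policy S A) h s :=
  odflt (psi h s) [pick a | Qw M0 eta psi h s a == Defs.minA (Qw M0 eta psi h s)].
Definition xiw (M0 : mdp S A R) eta psi h s (a a' : A) : R :=
  (1 - eta) * (a' == a)%:R + eta * (a' == amin M0 eta psi h s)%:R.
Definition Mw (M0 : mdp S A R) eta psi : mdp S A R :=
  @MDP S A R (s_init M0) (hor M0)
    (fun h s a s' => \sum_(a' : A) trans M0 h s a' s' * xiw M0 eta psi h s a a')
    (fun h s a => \sum_(a' : A) rew M0 h s a' * xiw M0 eta psi h s a a').

Lemma amin_spec (M0 : mdp S A R) eta psi h s :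
  Qw M0 eta psi h s (amin M0 eta psi h s) = Defs.minA (Qw M0 eta psi h s).
Proof.
rewrite /amin; case: pickP => [a /eqP //|H].
have [b Hb] := minA_att (Qw M0 eta psi h s) (psi h s).
by have := H b; rewrite Hb eqxx.
Qed.

Lemma sum_ind (b : A) : \sum_(a' : A) (a' == b)%:R = 1 :> R.
Proof.
by rewrite (bigD1 b) //= eqxx big1 ?addr0 // => a' /negbTE ->.
Qed.

Lemma sum_ind2 (b c : A) (x y : R) (Q : A -> R) :
  \sum_(a' : A) (x * (a' == b)%:R + y * (a' == c)%:R) * Q a' = x * Q b + y * Q c.
Proof.
under eq_bigr do rewrite mulrDl.
rewrite big_split /=; congr (_ + _).
  rewrite (bigD1 b) //= eqxx mulr1 big1 ?addr0 // => a' /negbTE ->.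
  by rewrite mulr0 mul0r.
rewrite (bigD1 c) //= eqxx mulr1 big1 ?addr0 // => a' /negbTE ->.
by rewrite mulr0 mul0r.
Qed.

Lemma Mw_pert (M0 : mdp S A R) eta psi :
  0 <= eta <= 1 -> perturbation M0 eta (Mw M0 eta psi).
Proof.
move=> /andP[He0 He1]; split; first by []; split; first by [].
exists (xiw M0 eta psi) => h hlt s a; split; last first.
  split; last by split.
  by rewrite /xiw eqxx mulr1 lerDl; apply: mulr_ge0 => //; apply: ler0n.
split.
  move=> a'; rewrite /xiw; apply: addr_ge0; apply: mulr_ge0 => //.
  by rewrite subr_ge0.
rewrite /xiw big_split /= -!big_distrr /= !sum_ind; ring.
Qed.

Lemma Mw_val (M0 : mdp S A R) eta psi :
  forall n h s, (h + n = hor M0)%N -> vrec (Mw M0 eta psi) psi n h s = Wrec M0 eta psi n h s.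
Proof.
elim=> [|n IH] h s Hh; first by [].
have E : vrec (Mw M0 eta psi) psi n h.+1 = Wrec M0 eta psi n h.+1.
  by apply: functional_extensionality => s'; apply: IH; rewrite addSnnS.
rewrite vrec_S (@pert_Q _ M0 h s (psi h s) (xiw M0 eta psi h s (psi h s))) //= E.
rewrite /xiw sum_ind2.
have := amin_spec M0 eta psi h s; rewrite /Qw -Hh addnS subSS addKn => ->.
by [].
Qed.

End Aux.
Arguments Wrec {R S A}.
Arguments Mw {R S A}.
Arguments W_eq_rdp {R S A M0 eta rho}.

Theorem theorem1 (R : realFieldType) (S A : finType) (M0 : mdp S A R)
    (eta : R) (rho : policy S A) :
  valid_mdp M0 -> deterministic M0 -> 0 <= eta <= 1 ->
  rdp_output M0 eta rho ->
  exists2 Mstar : mdp S A R, perturbation M0 eta Mstar &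
    (forall M, perturbation M0 eta M -> value Mstar rho <= value M rho) /\
    (forall psi : policy S A, exists2 Mpsi : mdp S A R, perturbation M0 eta Mpsi &
       (forall M, perturbation M0 eta M -> value Mpsi psi <= value M psi) /\
       value Mpsi psi <= value Mstar rho).
Proof.
move=> Hv _ He Hr.
have key psi M : perturbation M0 eta M ->
    Wrec M0 eta psi (hor M0) 0 (s_init M0) <= value M psi.
  move=> HM; have HM' := HM; case: HM' => Hs [Hh _].
  by rewrite /value Hs Hh; apply: W_le_v.
have vW psi : value (Mw M0 eta psi) psi = Wrec M0 eta psi (hor M0) 0 (s_init M0).
  by rewrite /value; apply: Mw_val.
exists (Mw M0 eta rho); first exact: Mw_pert.
split; first by move=> M HM; rewrite vW; apply: key.
move=> psi; exists (Mw M0 eta psi); first exact: Mw_pert.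
split; first by move=> M HM; rewrite vW; apply: key.
rewrite !vW (W_eq_rdp Hr) //; exact: W_le_rdp.
Qed.
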